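(* Let $\phi:\mathbb{N}\cup\{0\}\to\mathbb{R}_+$ be such that for every $C>0$ the series $\sum_{k\in\mathbb{N}}C^k\phi(k)(k!)^{-2}$ converges. Then $\mathcal{S}\subset T_\phi(V)$, i.e. the signature $S(\gamma)_{s,t}$ of every continuous bounded variation path $\gamma$ and every $s<t$ belongs to $T_\phi(V)$.
   Context: $V$ is a finite-dimensional real inner product space, $\langle\cdot,\cdot\rangle_k$ the induced Hilbert–Schmidt inner product on $V^{\otimes k}$, $T(V)=\bigoplus_kV^{\otimes k}$ (tensor polynomials) and $T((V))=\prod_kV^{\otimes k}$ (formal tensor series). $\langle a,b\rangle_\phi=\sum_k\phi(k)\langle a_k,b_k\rangle_k$ and $T_\phi(V)$ is the Hilbert space completion of $T(V)$ under it, viewed inside $T((V))$. Signature: $S(\gamma)_{s,t}=1+\sum_{k\ge1}\int_{s<u_1<\dots<u_k<t}d\gamma_{u_1}\otimes\cdots\otimes d\gamma_{u_k}$, and $\mathcal{S}=\{S(\gamma)_{s,t}:\gamma \text{ continuous of bounded variation},\ s<t\}$. *)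

(* Defs.v *)
From HB Require Import structures.
From mathcomp Require Import all_boot all_order all_algebra.
From mathcomp Require Import all_classical all_reals all_analysis.
Set Implicit Arguments. Unset Strict Implicit. Unset Printing Implicit Defensive.
Import Order.TTheory GRing.Theory Num.Theory.
Import numFieldNormedType.Exports.
Local Open Scope classical_set_scope.
Local Open Scope ring_scope.

(* V is identified with R^d (via an orthonormal basis); a path is a
   function R -> 'rV[R]_d, coordinate i of gamma u is gamma u ord0 i. *)
Section Defs.
Variable R : realType.
Variable d : nat.

Definition eucl (v : 'rV[R]_d) : R := Num.sqrt (\sum_(i < d) v ord0 i ^+ 2).

Definition pvariation (a : R) (gamma : R -> 'rV[R]_d) (p : seq R) : R :=
  \sum_(j < size p) eucl (gamma (nth a p j) - gamma (nth a (a :: p) j)).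

Definition bv_on (a b : R) (gamma : R -> 'rV[R]_d) : Prop :=
  exists M : R, forall p : seq R, itv_partition a b p -> pvariation a gamma p <= M.

Definition RSsum (f g : R -> R) (a : R) (p xi : seq R) : R :=
  \sum_(j < size p) f (nth a xi j) * (g (nth a p j) - g (nth a (a :: p) j)).

Definition is_RS (f g : R -> R) (a b I : R) : Prop :=
  forall e : R, 0 < e -> exists2 delta : R, 0 < delta &
    forall p xi : seq R, itv_partition a b p -> size xi = size p ->
      (forall j, (j < size p)%N ->
         nth a (a :: p) j <= nth a xi j <= nth a p j) ->
      (forall j, (j < size p)%N -> nth a p j - nth a (a :: p) j < delta) ->
      `| RSsum f g a p xi - I | < e.

(* the Riemann--Stieltjes integral (0 if it does not exist) *)
Definition RSint (f g : R -> R) (a b : R) : R := xget 0 [set I | is_RS f g a b I].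

(* J gamma s w t, for w = [:: i_k; ...; i_1] (a REVERSED word),
   is the iterated integral over s<u_1<...<u_k<t of
   d gamma^{i_1}_{u_1} ... d gamma^{i_k}_{u_k}. *)
Fixpoint Jint (gamma : R -> 'rV[R]_d) (s : R) (w : seq 'I_d) : R -> R :=
  match w with
  | [::] => fun _ => 1
  | i :: w' => fun t => RSint (Jint gamma s w') (fun u => gamma u ord0 i) s t
  end.

(* formal tensor series: component k is an element of V^{(x)k}, given by its
   coordinates in the basis e_{w_1} (x) ... (x) e_{w_k}, w a word of length k *)
Definition tseries := forall k : nat, k.-tuple 'I_d -> R.

Definition signature (gamma : R -> 'rV[R]_d) (s t : R) : tseries :=
  fun k w => Jint gamma s (rev (tval w)) t.

Definition hs_norm2 (a : tseries) (k : nat) : R :=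
  \sum_(w : k.-tuple 'I_d) a k w ^+ 2.

Definition in_Tphi (phi : nat -> R) (a : tseries) : Prop :=
  cvgn (series (fun k => phi k * hs_norm2 a k)).

End Defs.

(* Main.v *)
Require Import Defs.
From HB Require Import structures.
From mathcomp Require Import all_boot all_order all_algebra.
From mathcomp Require Import all_classical all_reals all_analysis.
From mathcomp Require Import ring lra.
Import Order.TTheory GRing.Theory Num.Theory.
Import numFieldNormedType.Exports.
Local Open Scope classical_set_scope.
Local Open Scope ring_scope.

Section Aux.
Variable R : realType.

Lemma pow_step (u v : R) (k : nat) : 0 <= u -> u <= v ->
  u ^+ k * (v - u) * k.+1%:R <= v ^+ k.+1 - u ^+ k.+1.
Proof.
move=> u0 uv; rewrite subrXX /=.
have -> : u ^+ k * (v - u) * k.+1%:R = (v - u) * \sum_(i < k.+1) u ^+ k.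
  by rewrite sumr_const card_ord -mulr_natr; ring.
rewrite ler_wpM2l ?subr_ge0 //; apply: ler_sum => i _.
have hi : (i <= k)%N by rewrite -ltnS.
rewrite -{1}(subnK hi) exprD ler_wpM2r ?exprn_ge0 //.
by apply: lerXn2r; rewrite // nnegrE ?(le_trans u0 uv).
Qed.

Lemma nth_belast' (a : R) p j : (j < size p)%N -> nth a (belast a p) j = nth a (a :: p) j.
Proof.
elim: p a j => [//|x p IH] a [|j] //= hj.
rewrite (set_nth_default x); last by rewrite size_belast.
by rewrite IH // (set_nth_default x) //= ltnW.
Qed.

Lemma RSsum_cons (f g : R -> R) a x p xi : size xi = size p ->
  RSsum f g a (x :: p) (a :: xi) = f a * (g x - g a) + RSsum f g x p xi.
Proof.
move=> hs; rewrite /RSsum /= big_ord_recl /=; congr (_ + _).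
apply: eq_bigr => j _ /=.
idtac.
have hj : (j < size p)%N by []. idtac.
rewrite (set_nth_default x); last by rewrite hs.
rewrite (set_nth_default x a hj) add0n (set_nth_default x a (s:=x::p)) //=; last exact: ltnW.
Qed.

Lemma rs_bound (f g W : R -> R) (k : nat) (c : R) (b : R) (p : seq R) :
  0 <= c ->
  forall a, itv_partition a b p -> 0 <= W a ->
  (forall x, a <= x <= b -> `|f x| <= c * W x ^+ k) ->
  (forall x y, a <= x -> x <= y -> y <= b -> `|g y - g x| <= W y - W x) ->
  `|RSsum f g a p (belast a p)| * k.+1%:R <= c * (W b ^+ k.+1 - W a ^+ k.+1).
Proof.
move=> c0; elim: p => [|x p IH] a hp Wa hf hg.
  by rewrite (itv_partition_nil hp) /RSsum big_ord0 normr0 mul0r subrr mulr0.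
have [/andP [ax _] _] := hp.
have hp' := itv_partition_cons hp.
have xb := itv_partition_le hp'.
have hax : `|g x - g a| <= W x - W a by apply: hg => //; exact: ltW.
have Wx : 0 <= W x by have := le_trans (normr_ge0 _) hax; rewrite subr_ge0 => /(le_trans Wa).
have Wax : W a <= W x by have := le_trans (normr_ge0 _) hax; rewrite subr_ge0.
rewrite /= RSsum_cons ?size_belast //.
apply: le_trans (_ : (`|f a * (g x - g a)| + `|RSsum f g x p (belast x p)|) * k.+1%:R <= _).
  by rewrite ler_wpM2r // ler_normD.
rewrite mulrDl.
have -> : c * (W b ^+ k.+1 - W a ^+ k.+1) =
   c * (W x ^+ k.+1 - W a ^+ k.+1) + c * (W b ^+ k.+1 - W x ^+ k.+1) by ring.
apply: lerD; last first.
  apply: IH => //.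
    move=> y /andP [xy yb]; apply: hf; rewrite yb andbT; exact: le_trans (ltW ax) xy.
  move=> y z xy yz zb; apply: hg => //; exact: le_trans (ltW ax) xy.
apply: le_trans (_ : c * (W a ^+ k * (W x - W a) * k.+1%:R) <= _); last first.
  by rewrite ler_wpM2l // pow_step.
rewrite normrM mulrA mulrA ler_wpM2r //.
apply: le_trans (_ : c * W a ^+ k * `|g x - g a| <= _).
  rewrite ler_wpM2r //; apply: hf; rewrite lexx /=; exact: le_trans (ltW ax) xb.
by rewrite ler_wpM2l // mulr_ge0 // exprn_ge0.
Qed.

Lemma mesh_part_n (dl : R) (dl0 : 0 < dl) : forall n a b, a <= b -> b - a < n%:R * (dl / 2) ->
  exists p, path (fun x y => (x < y) && (y - x < dl)) a p && (last a p == b).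
Proof.
elim=> [|n IH] a b ab hn.
  by move: hn; rewrite mul0r subr_lt0 => /(le_lt_trans ab); rewrite ltxx.
have [hlt|hge] := ltP (b - a) dl.
  have [->|anb] := eqVneq a b; first by exists [::]; rewrite /= eqxx.
  exists [:: b]; rewrite /= eqxx hlt !andbT.
  by rewrite lt_neqAle anb ab.
have h2 : 0 < dl / 2 by rewrite divr_gt0.
have hab : a + dl / 2 <= b by lra.
have hn' : b - (a + dl / 2) < n%:R * (dl / 2) by move: hn; rewrite mulrSr; lra.
have [p hp] := IH _ _ hab hn'.
exists (a + dl / 2 :: p); move/andP: hp => [hp1 hp2]; rewrite /= hp1 hp2 !andbT.
by apply/andP; split; lra.
Qed.

Lemma mesh_part (dl a b : R) : 0 < dl -> a <= b ->
  exists p, itv_partition a b p /\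
    forall j, (j < size p)%N -> nth a p j - nth a (a :: p) j < dl.
Proof.
move=> dl0 ab.
have h2 : 0 < dl / 2 by rewrite divr_gt0.
have x0 : 0 <= (b - a) / (dl / 2) by rewrite divr_ge0 // ?subr_ge0 // ltW.
have hn : b - a < (Num.trunc ((b - a) / (dl / 2))).+1%:R * (dl / 2).
  rewrite -ltr_pdivrMr //; rewrite -truncn_lt_nat //.
have [p /andP [hp /eqP hl]] := @mesh_part_n dl dl0 _ _ _ ab hn.
exists p; split.
  split => //; last by apply/eqP.
  by apply: sub_path hp => x y /andP [].
move=> j hj; move/(pathP a): hp => /(_ j hj) /andP [] //.
Qed.

Variable d : nat.
Implicit Types gamma : R -> 'rV[R]_d.

Lemma eucl_ge0 (v : 'rV[R]_d) : 0 <= eucl v.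
Proof. exact: sqrtr_ge0. Qed.

Lemma eucl_coord (v : 'rV[R]_d) i : `|v ord0 i| <= eucl v.
Proof.
rewrite /eucl -sqrtr_sqr ler_sqrt; last by apply: sumr_ge0 => j _; exact: sqr_ge0.
rewrite (bigD1 i) //= lerDl; apply: sumr_ge0 => j _; exact: sqr_ge0.
Qed.

Lemma pvar_ge0 a gamma p : 0 <= pvariation a gamma p.
Proof. by apply: sumr_ge0 => j _; exact: eucl_ge0. Qed.

Lemma pvar_cons a gamma x p :
  pvariation a gamma (x :: p) = eucl (gamma x - gamma a) + pvariation x gamma p.
Proof.
rewrite /pvariation /= big_ord_recl /=; congr (_ + _).
apply: eq_bigr => j _ /=.
have hj : (j < size p)%N by [].
rewrite (set_nth_default x a hj) (set_nth_default x a (s:=x::p)) //=; exact: ltnW.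
Qed.

Lemma pvar_rcons gamma y p : forall a,
  pvariation a gamma (rcons p y) = pvariation a gamma p + eucl (gamma y - gamma (last a p)).
Proof.
elim: p => [|x p IH] a.
  by rewrite /pvariation /= big_ord1 big_ord0 add0r.
by rewrite rcons_cons !pvar_cons IH addrA.
Qed.

Definition Vset gamma s u := [set pvariation s gamma p | p in itv_partition s u].
Definition Wv gamma s u := sup (Vset gamma s u).

Section W.
Variables (gamma : R -> 'rV[R]_d) (s t M : R).
Hypothesis hM : forall p, itv_partition s t p -> pvariation s gamma p <= M.

Lemma Vset_ub u : u <= t -> has_ubound (Vset gamma s u).
Proof.
move=> ut; exists M => _ [p hp <-].
have [ut'|tu|eut] := ltgtP u t; last by apply: hM; rewrite -eut.
  2: by move: (lt_le_trans tu ut); rewrite ltxx.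
clear ut; rename ut' into ut.
have hp' : itv_partition s t (rcons p t).
  by rewrite -cats1; apply: itv_partition_cat hp (itv_partition1 ut).
have h1 := hM _ hp'; rewrite pvar_rcons in h1; apply: le_trans h1; rewrite lerDl; exact: eucl_ge0.
Qed.

Lemma Vset_ne u : s <= u -> Vset gamma s u !=set0.
Proof.
move=> su; have [su'|us|eu] := ltgtP s u.
- by exists (pvariation s gamma [:: u]); exists [:: u] => //; exact: itv_partition1.
- by move: (lt_le_trans us su); rewrite ltxx.
- by exists (pvariation s gamma [::]); exists [::] => //; split => //=; rewrite eu.
Qed.

Lemma Wv_ge0 u : s <= u <= t -> 0 <= Wv gamma s u.
Proof.
move=> /andP [su ut]; have [x hx] := Vset_ne _ su.
apply: le_trans (ub_le_sup (Vset_ub _ ut) hx).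
by case: hx => p _ <-; exact: pvar_ge0.
Qed.

Lemma Wv_inc x y : s <= x -> x <= y -> y <= t ->
  eucl (gamma y - gamma x) <= Wv gamma s y - Wv gamma s x.
Proof.
move=> sx xy' yt; have [xy|yx|exy] := ltgtP x y.
2: by move: (lt_le_trans yx xy'); rewrite ltxx.
2: by rewrite exy !subrr /eucl big1 ?sqrtr0 // => i _; rewrite mxE expr0n.
rewrite lerBrDr -lerBrDl; apply: ge_sup; first exact: Vset_ne.
move=> _ [p hp <-]; rewrite lerBrDl.
have hp' : itv_partition s y (rcons p y).
  by rewrite -cats1; apply: itv_partition_cat hp (itv_partition1 xy).
have := ub_le_sup (Vset_ub _ yt) (ex_intro2 _ _ (rcons p y) hp' erefl).
by rewrite pvar_rcons (eqP hp.2) addrC.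
Qed.
End W.

Lemma Jint_bound gamma s t M :
  (forall p, itv_partition s t p -> pvariation s gamma p <= M) ->
  forall k w, size w = k -> forall u, s <= u <= t ->
  `|Jint gamma s w u| <= Wv gamma s u ^+ k / k`!%:R.
Proof.
move=> hM; elim=> [|k IH] [|i w] //= hw u /andP [su ut].
  by rewrite normr1 expr0 fact0 divr1.
have Wu : 0 <= Wv gamma s u by apply: (Wv_ge0 _ _ _ _ hM); rewrite su ut.
have hfk : (0 < k`!%:R :> R) by rewrite ltr0n fact_gt0.
have hfk1 : (0 < (k.+1)`!%:R :> R) by rewrite ltr0n fact_gt0.
case: (pselect (exists I, [set I | is_RS (Jint gamma s w) (fun v => gamma v ord0 i) s u I] I)) => [hex|hnex]; last first.
  rewrite /RSint xgetPN; last by move=> x hx; apply: hnex; exists x.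
  by rewrite normr0 divr_ge0 // ?exprn_ge0 // ltW.
have hI := xgetPex 0 hex; rewrite /RSint; set I := xget _ _ in hI *.
apply/ler_addgt0Pr => e e0; have [dl dl0 hdl] := hI e e0.
have [p [hp hmesh]] := @mesh_part dl s u dl0 su.
have hxi : size (belast s p) = size p by rewrite size_belast.
have htag : forall j, (j < size p)%N -> nth s (s :: p) j <= nth s (belast s p) j <= nth s p j.
  move=> j hj; rewrite nth_belast' // lexx /=.
  by case: hp => /(pathP s) /(_ j hj) /ltW.
have hlt := hdl p (belast s p) hp hxi htag hmesh.
have hc : 0 <= (k`!%:R : R)^-1 by rewrite invr_ge0 ltW.
have hb := @rs_bound (Jint gamma s w) (fun v => gamma v ord0 i) (Wv gamma s) k (k`!%:R^-1) u p
  hc s hp.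
have hRS : `|RSsum (Jint gamma s w) (fun v => gamma v ord0 i) s p (belast s p)| <=
    Wv gamma s u ^+ k.+1 / (k.+1)`!%:R.
  have hw' : size w = k by case: hw.
  have st : s <= t := le_trans su ut.
  have Ws : 0 <= Wv gamma s s by apply: (Wv_ge0 _ _ _ _ hM); rewrite lexx st.
  have := hb Ws.
  have hf : forall x, s <= x <= u -> `|Jint gamma s w x| <= k`!%:R^-1 * Wv gamma s x ^+ k.
    move=> x /andP [sx xu]; rewrite mulrC; apply: IH => //; rewrite sx /=; exact: le_trans xu ut.
  have hg : forall x y, s <= x -> x <= y -> y <= u ->
      `|gamma y ord0 i - gamma x ord0 i| <= Wv gamma s y - Wv gamma s x.
    move=> x y sx xy yu; apply: le_trans (Wv_inc _ _ _ _ hM _ _ sx xy (le_trans yu ut)).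
    by have := eucl_coord (gamma y - gamma x) i; rewrite !mxE.
  move=> /(_ hf hg) hb2.
  have hb3 : `|RSsum (Jint gamma s w) (fun v => gamma v ord0 i) s p (belast s p)| * k.+1%:R
     <= k`!%:R^-1 * Wv gamma s u ^+ k.+1.
    apply: (le_trans hb2); rewrite ler_wpM2l // lerBlDr lerDl exprn_ge0 //.
  have hk1 : (0 < k.+1%:R :> R) by rewrite ltr0n.
  rewrite -(ler_pM2r hk1); apply: (le_trans hb3); rewrite le_eqVlt; apply/orP; left; apply/eqP.
  rewrite factS natrM; field.
  by rewrite gt_eqF //= -natr1 gt_eqF // addrC ltr_pwDr // ler0n.
apply: le_trans (lerD hRS (ltW hlt)).
set RS := RSsum _ _ _ _ _.
rewrite [X in `|X|](_ : I = RS - (RS - I)); first exact: ler_normB.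
by rewrite opprB addrC subrK.
Qed.
End Aux.

Lemma series_shift_cvg (R : realType) (a : nat -> R) :
  cvgn (series (fun k => a k.+1)) -> cvgn (series a).
Proof.
move=> h.
have e : (fun n => series a n.+1) = (fun n => a 0%N + series (fun k => a k.+1) n).
  apply/funext => n; rewrite !seriesEord /= big_ord_recl //=.
have : cvgn (fun n => series a n.+1).
  rewrite e; apply: is_cvgD => //; exact: is_cvg_cst.
move=> h2; apply: (cvgP (lim ((fun n => series a n.+1) @ \oo))).
by rewrite -(cvg_shiftS (series a)).
Qed.

Lemma term_bound (R : realType) (d : nat) (a : tseries R d) (B : R) (k : nat) :
  0 <= B -> (forall w, `|a k w| <= B) -> hs_norm2 a k <= (d ^ k)%:R * B ^+ 2.
Proof.
move=> B0 hB; rewrite /hs_norm2.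
apply: le_trans (_ : \sum_(w : k.-tuple 'I_d) B ^+ 2 <= _).
  apply: ler_sum => w _; rewrite -real_normK ?num_real //.
  by apply: lerXn2r; rewrite ?nnegrE // ?normr_ge0.
by rewrite sumr_const card_tuple card_ord mulr_natl.
Qed.

Theorem mainTheorem10 (R : realType) (d : nat) (phi : nat -> R)
  (phi_pos : forall k, 0 < phi k)
  (hphi : forall C : R, 0 < C ->
     cvgn (series (fun k : nat => C ^+ k.+1 * phi k.+1 / (k.+1)`!%:R ^+ 2)))
  (gamma : R -> 'rV[R]_d) (s t : R) :
  s < t ->
  {within `[s, t], continuous gamma} ->
  bv_on s t gamma ->
  in_Tphi phi (signature gamma s t).
Proof.
move=> hst _ [M hM].
have st := ltW hst.
set W := @Wv R d gamma s t.
have W0 : 0 <= W by apply: (Wv_ge0 _ _ _ _ _ _ hM); rewrite st lexx.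
have hb : forall k (w : k.-tuple 'I_d), `|signature gamma s t w| <= W ^+ k / k`!%:R.
  move=> k w; rewrite /signature; apply: (Jint_bound _ _ _ _ _ _ hM); last by rewrite st lexx.
  by rewrite size_rev size_tuple.
set C : R := d%:R * W ^+ 2 + 1.
have C0 : 0 < C by rewrite /C ltr_pwDr // mulr_ge0 // sqr_ge0.
have hfk : forall k, (0 < k`!%:R :> R) by move=> k; rewrite ltr0n fact_gt0.
have ht : forall k, phi k * hs_norm2 (signature gamma s t) k <= C ^+ k * phi k / k`!%:R ^+ 2.
  move=> k.
  have := term_bound _ _ _ _ _ (divr_ge0 (exprn_ge0 k W0) (ltW (hfk k))) (hb k).
  move=> h; rewrite [C ^+ k * phi k]mulrC -mulrA ler_wpM2l ?(ltW (phi_pos k)) //.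
  apply: (le_trans h).
  rewrite expr_div_n mulrA natrX -exprM.
  have -> : (d%:R ^+ k * W ^+ (k * 2) : R) = (d%:R * W ^+ 2) ^+ k by rewrite exprMn -exprM mulnC.
  apply: ler_wpM2r; first by rewrite invr_ge0 exprn_ge0 // ltW.
  have h1 : 0 <= d%:R * W ^+ 2 by rewrite mulr_ge0 ?ler0n ?sqr_ge0.
  apply: (lerXn2r k); rewrite ?nnegrE ?(ltW C0) //.
  by rewrite /C lerDl.
rewrite /in_Tphi; apply: series_shift_cvg.
apply: (series_le_cvg _ _ _ (hphi C C0)).
- move=> n; rewrite mulr_ge0 ?(ltW (phi_pos _)) //; apply: sumr_ge0 => w _; exact: sqr_ge0.
- move=> n; rewrite divr_ge0 ?exprn_ge0 ?ler0n // mulr_ge0 ?exprn_ge0 ?(ltW (phi_pos _)) ?(ltW C0) //.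
- move=> n; exact: ht.
Qed.
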